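(* Let $\mathcal{S}\subseteq\mathcal{S}^N$ be a closed set such that for every $\bm S\in\mathbb{R}^{N\times N}$ the Frobenius-norm projection $P_{\mathcal{S}}(\bm S):=\arg\min_{\hat{\bm S}\in\mathcal{S}}\Vert\bm S-\hat{\bm S}\Vert_{\rm F}$ is unique. Fix $\bm\Lambda_o\in\mathcal{D}_N$ with non-increasing diagonal entries and let $\mathcal{M}:=\{\bm V\bm\Lambda_o\bm V^T:\bm V\in{\rm O}(N)\}$. Let $\bm S_0\in\mathcal{M}$ and generate a sequence by the alternating projections method $$\bm S_{k+1/2}=P_{\mathcal{S}}(\bm S_k),\qquad \bm S_{k+1}\in P_{\mathcal{M}}(\bm S_{k+1/2}),$$ where for $\bm Y\in\mathcal{S}^N$, $P_{\mathcal{M}}(\bm Y)$ denotes the set of matrices $\bm Q\bm\Lambda_o\bm Q^T$ over all eigendecompositions $\bm Y=\bm Q\bm\Lambda\bm Q^T$ ($\bm Q\in{\rm O}(N)$) with non-increasing diagonal $\bm\Lambda$. Then there exists a limit point $\bm S$ of the sequence $(\bm S_k)$ which is a fixed point of this iteration and satisfies $$\Vert\bm S-P_{\mathcal{S}}(\bm S)\Vert=\lim_{k\to\infty}\Vert\bm S_k-P_{\mathcal{S}}(\bm S_k)\Vert .$$ Moreover, if this limit is zero, then $\bm S\in\mathcal{S}\cap\mathcal{M}$.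
   Context: $\mathcal{S}^N$ denotes the set of real symmetric $N\times N$ matrices, $\mathcal{D}_N$ the set of real $N\times N$ diagonal matrices, ${\rm O}(N)$ the set of $N\times N$ real orthogonal matrices. A diagonal matrix $\bm\Lambda$ has non-increasing diagonal entries if $[\bm\Lambda]_{ii}\ge[\bm\Lambda]_{jj}$ for $i<j$. Fixed point: a matrix $\bm S\in\mathcal{S}^N$ is a fixed point of the alternating projections iteration if there exists an eigendecomposition $P_{\mathcal{S}}(\bm S)=\bm Q\bm\Lambda\bm Q^T$ with $\bm Q\in{\rm O}(N)$ and non-increasing diagonal $\bm\Lambda$ such that $\bm S=\bm Q\bm\Lambda_o\bm Q^T$; equivalently $\bm S\in P_{\mathcal{M}}(P_{\mathcal{S}}(\bm S))$. *)

(* Defs.v *)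
From Stdlib Require Import Reals.
From mathcomp Require Import all_boot.

Set Implicit Arguments.
Unset Strict Implicit.

Local Open Scope R_scope.

Definition Mat (N : nat) := 'I_N -> 'I_N -> R.

Definition mmul {N : nat} (A B : Mat N) : Mat N :=
  fun i j => \big[Rplus/0]_(k < N) (A i k * B k j).

Definition mtr {N : nat} (A : Mat N) : Mat N := fun i j => A j i.

Definition msub {N : nat} (A B : Mat N) : Mat N := fun i j => A i j - B i j.

Definition idm (N : nat) : Mat N := fun i j => if i == j then 1 else 0.

Definition is_orthogonal {N : nat} (Q : Mat N) : Prop := mmul (mtr Q) Q = @idm N.

Definition is_symmetric {N : nat} (A : Mat N) : Prop := mtr A = A.

Definition is_diagonal {N : nat} (D : Mat N) : Prop :=
  forall i j : 'I_N, i <> j -> D i j = 0.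

Definition nonincreasing {N : nat} (D : Mat N) : Prop :=
  forall i j : 'I_N, (i < j)%N -> D j j <= D i i.

Definition frob {N : nat} (A : Mat N) : R :=
  sqrt (\big[Rplus/0]_(i < N) \big[Rplus/0]_(j < N) (A i j * A i j)).

Definition mdist {N : nat} (A B : Mat N) : R := frob (msub A B).

Definition mat_cv {N : nat} (u : nat -> Mat N) (L : Mat N) : Prop :=
  forall i j : 'I_N, Un_cv (fun k => u k i j) (L i j).

(* closed set (sequentially closed, equivalent in R^{N x N}) *)
Definition mat_closed {N : nat} (C : Mat N -> Prop) : Prop :=
  forall (u : nat -> Mat N) (L : Mat N),
    (forall k, C (u k)) -> mat_cv u L -> C L.

Definition is_proj {N : nat} (C : Mat N -> Prop) (X P : Mat N) : Prop :=
  C P /\ forall Y, C Y -> mdist X P <= mdist X Y.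

Definition Mset {N : nat} (Lo : Mat N) (X : Mat N) : Prop :=
  exists V, is_orthogonal V /\ X = mmul (mmul V Lo) (mtr V).

Definition in_PM {N : nat} (Lo : Mat N) (Y X : Mat N) : Prop :=
  exists Q L : Mat N, is_orthogonal Q /\ is_diagonal L /\ nonincreasing L /\
    Y = mmul (mmul Q L) (mtr Q) /\ X = mmul (mmul Q Lo) (mtr Q).

Definition mat_limit_point {N : nat} (u : nat -> Mat N) (L : Mat N) : Prop :=
  exists phi : nat -> nat, (forall k, (phi k < phi (Datatypes.S k))%nat) /\
    mat_cv (fun k => u (phi k)) L.

(* Main.v *)
Require Import Defs.
From Stdlib Require Import Reals Lra Lia FunctionalExtensionality ClassicalEpsilon.
From mathcomp Require Import all_boot all_algebra.
From mathcomp Require Import Rstruct.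
Require Import Defs.
Local Open Scope R_scope.

Notation "\sR_ ( i < n ) F" := (\big[Rplus/0]_(i < n) F)
  (at level 41, F at level 41, i, n at level 50).

Lemma sumR_le (I : Type) (r : seq I) (P : pred I) (F G : I -> R) :
  (forall i, P i -> F i <= G i) ->
  \big[Rplus/0]_(i <- r | P i) F i <= \big[Rplus/0]_(i <- r | P i) G i.
Proof.
move=> H; apply: (big_ind2 (fun x y => x <= y)); first exact: Rle_refl.
- by move=> *; apply: Rplus_le_compat.
- exact: H.
Qed.

Lemma sumR_ge0 (I : Type) (r : seq I) (P : pred I) (F : I -> R) :
  (forall i, P i -> 0 <= F i) -> 0 <= \big[Rplus/0]_(i <- r | P i) F i.
Proof.
move=> H; apply: (big_ind (fun x => 0 <= x)); first exact: Rle_refl.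
- by move=> *; apply: Rplus_le_le_0_compat.
- exact: H.
Qed.

Lemma abel (a c : nat -> R) n :
  \sR_(i < n) (a i * c i) =
  \sR_(p < n) ((a p - a p.+1) * \sR_(i < p.+1) c i) + a n * \sR_(i < n) c i.
Proof.
elim: n => [|n IH]; first by rewrite !big_ord0; ring.
rewrite big_ord_recr /= IH.
rewrite [\big[Rplus/0]_(p < n.+1) _]big_ord_recr /=.
rewrite [\big[Rplus/0]_(i < n.+1) c i]big_ord_recr /=. ring.
Qed.

Lemma sum_split (F : nat -> R) m n : (m <= n)%N ->
  \sR_(i < n) F i = \sR_(i < m) F i + \big[Rplus/0]_(m <= i < n) F i.
Proof.
move=> Hmn; rewrite -!(big_mkord xpredT) (@big_cat_nat _ _ _ m 0 n _ _ (leq0n m) Hmn) //.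
Qed.
Arguments sum_split F {m n}.

Lemma sum_nat0 (F : nat -> R) m n :
  (forall i, (m <= i)%N -> F i = 0) -> \big[Rplus/0]_(m <= i < n) F i = 0.
Proof.
move=> H; rewrite big_nat_cond big1 // => i /andP[/andP[Hi _] _]; exact: H.
Qed.

Lemma sum_le_widen (F : nat -> R) m n : (m <= n)%N ->
  (forall i, (m <= i < n)%N -> 0 <= F i) ->
  \sR_(i < m) F i <= \sR_(i < n) F i.
Proof.
move=> Hmn H; rewrite (sum_split F Hmn).
have : 0 <= \big[Rplus/0]_(m <= i < n) F i.
  rewrite big_nat_cond; apply: sumR_ge0 => i /andP[Hi _]; exact: H.
lra.
Qed.

Arguments sum_le_widen F {m n}.

Section Rearr.
Variables (n : nat) (P : nat -> nat -> R).
Hypothesis P0 : forall i j, (i < n)%N -> (j < n)%N -> 0 <= P i j.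
Hypothesis Prow : forall i, (i < n)%N -> \sR_(j < n) P i j = 1.
Hypothesis Pcol : forall j, (j < n)%N -> \sR_(i < n) P i j = 1.

Lemma partial_le (b : nat -> R) (p : nat) :
  (forall q, b q.+1 <= b q) -> (p < n)%N ->
  \sR_(i < p.+1) \sR_(j < n) (P i j * b j) <= \sR_(i < p.+1) b i.
Proof.
move=> bdec Hp.
set G := fun j => \sR_(i < p.+1) P i j.
have -> : \sR_(i < p.+1) \sR_(j < n) (P i j * b j) = \sR_(j < n) (b j * G j).
  rewrite exchange_big /=; apply: eq_bigr => j _.
  rewrite /G big_distrr /=; apply: eq_bigr => i _; ring.
set ind := fun j : nat => if (j <= p)%N then 1 else 0.
have -> : \sR_(i < p.+1) b i = \sR_(j < n) (b j * ind j).
  rewrite (sum_split (fun j => b j * ind j) Hp).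
  rewrite [X in _ = _ + X]sum_nat0; last first.
    by move=> i Hi; rewrite /ind leqNgt Hi /=; ring.
  rewrite Rplus_0_r; apply: eq_bigr => i _; rewrite /ind -ltnS ltn_ord; ring.
have sumG : \sR_(j < n) G j = \sR_(i < p.+1) 1.
  rewrite /G exchange_big /=; apply: eq_bigr => i _; apply: Prow.
  by apply: (leq_trans (ltn_ord i)).
have sumI : \sR_(j < n) ind j = \sR_(i < p.+1) 1.
  rewrite (sum_split ind Hp) [X in _ + X = _]sum_nat0; last first.
    by move=> i Hi; rewrite /ind leqNgt Hi.
  rewrite Rplus_0_r; apply: eq_bigr => i _; by rewrite /ind -ltnS ltn_ord.
have G0 : forall j, (j < n)%N -> 0 <= G j.
  move=> j Hj; apply: sumR_ge0 => i _; apply: P0 => //.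
  by apply: (leq_trans (ltn_ord i)).
have G1 : forall j, (j < n)%N -> G j <= 1.
  move=> j Hj; rewrite -(Pcol j Hj) /G.
  apply: (sum_le_widen (fun i => P i j)) => // i /andP[_ Hi]; exact: P0.
rewrite (abel b G) (abel b ind) sumG sumI.
apply: Rplus_le_compat_r; apply: sumR_le => q _.
apply: Rmult_le_compat_l; first by have := bdec q; lra.
have Hq : (q < n)%N := ltn_ord q.
case: (leqP q p) => Hqp.
- apply: sumR_le => j _; rewrite /ind.
  have -> : (j <= p)%N by apply: leq_trans Hqp; rewrite -ltnS ltn_ord.
  by apply: G1; apply: leq_ltn_trans Hq; rewrite -ltnS ltn_ord.
- have -> : \sR_(j < q.+1) ind j = \sR_(i < p.+1) 1.
    rewrite (sum_split ind (leqW Hqp)) [X in _ + X = _]sum_nat0; last first.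
      by move=> i Hi; rewrite /ind leqNgt Hi.
    rewrite Rplus_0_r; apply: eq_bigr => i _; by rewrite /ind -ltnS ltn_ord.
  rewrite -sumG; apply: (sum_le_widen G) => // i /andP[_ Hi]; exact: G0.
Qed.

Lemma rearrangement (a b : nat -> R) :
  (forall q, a q.+1 <= a q) -> (forall q, b q.+1 <= b q) ->
  \sR_(i < n) (a i * \sR_(j < n) (P i j * b j)) <= \sR_(i < n) (a i * b i).
Proof.
move=> adec bdec.
rewrite (abel a (fun i => \sR_(j < n) (P i j * b j))) (abel a b).
have -> : \sR_(i < n) \sR_(j < n) (P i j * b j) = \sR_(i < n) b i.
  rewrite exchange_big /=; apply: eq_bigr => j _.
  rewrite -big_distrl /= Pcol //; ring.
apply: Rplus_le_compat_r; apply: sumR_le => p _.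
apply: Rmult_le_compat_l; first by have := adec p; lra.
exact: partial_le.
Qed.
End Rearr.

Definition tomx {N} (A : Mat N) : 'M[R]_N := \matrix_(i, j) A i j.

Lemma tomx_inj N (A B : Mat N) : tomx A = tomx B -> A = B.
Proof.
move=> H; apply: functional_extensionality => i;
  apply: functional_extensionality => j.
by have := congr1 (fun M : 'M[R]_N => M i j) H; rewrite !mxE.
Qed.

Lemma tomx_mul N (A B : Mat N) : tomx (mmul A B) = (tomx A *m tomx B)%R.
Proof. apply/matrixP => i j; rewrite !mxE /mmul. apply: eq_bigr => k _; by rewrite !mxE. Qed.

Lemma tomx_tr N (A : Mat N) : tomx (mtr A) = ((tomx A)^T)%R.
Proof. by apply/matrixP => i j; rewrite !mxE. Qed.

Lemma tomx_id N : tomx (@idm N) = (1%:M)%R.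
Proof. apply/matrixP => i j; rewrite !mxE /idm; by case: (i == j). Qed.

Lemma mmulA N (A B C : Mat N) : mmul (mmul A B) C = mmul A (mmul B C).
Proof. apply: tomx_inj; rewrite !tomx_mul; symmetry; apply: mulmxA. Qed.

Lemma mtr_mul N (A B : Mat N) : mtr (mmul A B) = mmul (mtr B) (mtr A).
Proof. apply: tomx_inj; rewrite (@tomx_tr _ (mmul A B)) !tomx_mul (@tomx_tr _ A) (@tomx_tr _ B); apply: trmx_mul. Qed.

Lemma mtrK N (A : Mat N) : mtr (mtr A) = A.
Proof. by []. Qed.

Lemma mmul1 N (A : Mat N) : mmul (@idm N) A = A.
Proof. apply: tomx_inj; rewrite tomx_mul tomx_id; apply: mul1mx. Qed.

Lemma mmulr1 N (A : Mat N) : mmul A (@idm N) = A.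
Proof. apply: tomx_inj; rewrite tomx_mul tomx_id; apply: mulmx1. Qed.

Lemma orth_r N (Q : Mat N) : is_orthogonal Q -> mmul Q (mtr Q) = @idm N.
Proof.
rewrite /is_orthogonal => H; apply: tomx_inj.
have H' := congr1 tomx H; rewrite tomx_mul tomx_id in H'.
rewrite tomx_mul tomx_id; apply: mulmx1C; exact H'.
Qed.

Definition ip {N} (A B : Mat N) : R := \sR_(i < N) \sR_(j < N) (A i j * B i j).

Lemma ip_tr N (A B : Mat N) : ip A B = (\tr ((tomx A)^T *m tomx B))%R.
Proof.
rewrite /ip /mxtrace exchange_big; apply: eq_bigr => j _.
rewrite !mxE; apply: eq_bigr => i _; by rewrite !mxE.
Qed.

Lemma ip_conj N (V A Q B : Mat N) :
  ip (mmul (mmul V A) (mtr V)) (mmul (mmul Q B) (mtr Q)) =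
  ip A (mmul (mmul (mmul (mtr V) Q) B) (mtr (mmul (mtr V) Q))).
Proof.
rewrite !ip_tr !tomx_mul (@tomx_tr _ (mmul (mtr V) Q)) tomx_mul (@tomx_tr _ V) (@tomx_tr _ Q).
rewrite !trmx_mul !trmxK -!mulmxA [in LHS]mxtrace_mulC !mulmxA.
reflexivity.
Qed.

Lemma sumRN (I : Type) (r : seq I) (P : pred I) (F : I -> R) :
  \big[Rplus/0]_(i <- r | P i) (- F i) = - \big[Rplus/0]_(i <- r | P i) F i.
Proof. by rewrite (big_morph Ropp Ropp_plus_distr Ropp_0). Qed.

Lemma ip_sym N (A B : Mat N) : ip A B = ip B A.
Proof. apply: eq_bigr => i _; apply: eq_bigr => j _; ring. Qed.

Lemma ip_subl N (X Y Z : Mat N) : ip (msub X Y) Z = ip X Z - ip Y Z.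
Proof.
rewrite /ip /Rminus -sumRN -big_split; apply: eq_bigr => i _.
rewrite -sumRN -big_split; apply: eq_bigr => j _; rewrite /msub; simpl; ring.
Qed.

Lemma ip_sub N (X Y : Mat N) :
  ip (msub X Y) (msub X Y) = ip X X + ip Y Y - 2 * ip X Y.
Proof.
rewrite !ip_subl ![ip _ (msub _ _)]ip_sym !ip_subl (ip_sym _ Y X); ring.
Qed.

Lemma frob_ip N (A : Mat N) : frob A = sqrt (ip A A).
Proof. by []. Qed.

Lemma ip_diag N (D M : Mat N) : is_diagonal D ->
  ip D M = \sR_(i < N) (D i i * M i i).
Proof.
move=> HD; apply: eq_bigr => i _.
rewrite (bigD1 i) //= big1; first ring.
move=> j Hj; rewrite HD; first ring.
by move=> E; rewrite E eqxx in Hj.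
Qed.

Lemma mmul_diag N (W L : Mat N) i j : is_diagonal L ->
  mmul W L i j = W i j * L j j.
Proof.
move=> HL; rewrite /mmul (bigD1 j) //= big1; first ring.
move=> k Hk; rewrite HL; first ring.
by move=> E; rewrite E eqxx in Hk.
Qed.

Lemma conj_diag N (W L : Mat N) i : is_diagonal L ->
  mmul (mmul W L) (mtr W) i i = \sR_(j < N) (W i j * W i j * L j j).
Proof.
move=> HL; apply: eq_bigr => j _; rewrite mmul_diag // /mtr; ring.
Qed.

Lemma mtr_id N : mtr (@idm N) = @idm N.
Proof.
apply: functional_extensionality => i; apply: functional_extensionality => j.
by rewrite /mtr /idm eq_sym.
Qed.

Lemma conj_id N (A : Mat N) : mmul (mmul (@idm N) A) (mtr (@idm N)) = A.
Proof. by rewrite mmul1 mtr_id mmulr1. Qed.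

Lemma ext_dec n (D : Mat n.+1) : nonincreasing D -> forall q,
  D (inord (minn q.+1 n)) (inord (minn q.+1 n)) <= D (inord (minn q n)) (inord (minn q n)).
Proof.
move=> HD q; case: (leqP n q) => Hq.
- have E1 : minn q.+1 n = n by apply/minn_idPr; apply: leqW.
  have E2 : minn q n = n by apply/minn_idPr.
  rewrite E1; exact: Rle_refl.
- have E1 : minn q.+1 n = q.+1 by apply/minn_idPl.
  have E2 : minn q n = q by apply/minn_idPl; apply: ltnW.
  rewrite E1; apply: HD; rewrite !inordK //; exact: ltnW.
Qed.

Lemma ext_val n (D : Mat n.+1) (i : 'I_n.+1) :
  D (inord (minn i n)) (inord (minn i n)) = D i i.
Proof. have E : minn i n = i by apply/minn_idPl; apply: leq_ord.
by rewrite E inord_val. Qed.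

Lemma vN N (V Q Lo L : Mat N) :
  is_orthogonal V -> is_orthogonal Q -> is_diagonal Lo -> nonincreasing Lo ->
  is_diagonal L -> nonincreasing L ->
  ip (mmul (mmul V Lo) (mtr V)) (mmul (mmul Q L) (mtr Q)) <= ip Lo L.
Proof.
move=> HV HQ HLo HLon HL HLn.
rewrite ip_conj; set W := mmul (mtr V) Q.
have WWt : mmul W (mtr W) = @idm N.
  rewrite /W mtr_mul mmulA -(mmulA _ Q) (@orth_r _ _ HQ) mmul1; exact: HV.
have WtW : mmul (mtr W) W = @idm N.
  rewrite /W mtr_mul mmulA -(mmulA _ V) (@orth_r _ _ HV) mmul1; exact: HQ.
have row : forall i, \sR_(j < N) (W i j * W i j) = 1.
  move=> i; have := congr1 (fun M : Mat N => M i i) WWt; rewrite /idm eqxx => <-.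
  by apply: eq_bigr.
have col : forall j, \sR_(i < N) (W i j * W i j) = 1.
  move=> j; have := congr1 (fun M : Mat N => M j j) WtW; rewrite /idm eqxx => <-.
  by apply: eq_bigr.
rewrite !ip_diag //.
have -> : \sR_(i < N) (Lo i i * mmul (mmul W L) (mtr W) i i) =
          \sR_(i < N) (Lo i i * \sR_(j < N) (W i j * W i j * L j j)).
  by apply: eq_bigr => i _; rewrite conj_diag.
case: N V Q Lo L HV HQ HLo HLon HL HLn W WWt WtW row col => [|n] V Q Lo L HV HQ HLo HLon HL HLn W WWt WtW row col.
  rewrite !big_ord0; exact: Rle_refl.
set a := fun k => Lo (inord (minn k n)) (inord (minn k n)).
set b := fun k => L (inord (minn k n)) (inord (minn k n)).
set P := fun i j : nat => W (inord i) (inord j) * W (inord i) (inord j).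
have E1 : \sR_(i < n.+1) (Lo i i * \sR_(j < n.+1) (W i j * W i j * L j j)) =
          \sR_(i < n.+1) (a i * \sR_(j < n.+1) (P i j * b j)).
  apply: eq_bigr => i _; rewrite /a ext_val; congr (_ * _).
  apply: eq_bigr => j _; rewrite /b ext_val /P !inord_val; reflexivity.
have E2 : \sR_(i < n.+1) (Lo i i * L i i) = \sR_(i < n.+1) (a i * b i).
  by apply: eq_bigr => i _; rewrite /a /b !ext_val.
rewrite E1 E2; apply: rearrangement.
- move=> i j _ _; rewrite /P; nra.
- move=> i Hi; rewrite -(row (inord i)); apply: eq_bigr => j _; by rewrite /P inord_val.
- move=> j Hj; rewrite -(col (inord j)); apply: eq_bigr => i _; by rewrite /P inord_val.
- exact: ext_dec.
- exact: ext_dec.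
Qed.

Lemma ip_conj_self N (V A B : Mat N) : is_orthogonal V ->
  ip (mmul (mmul V A) (mtr V)) (mmul (mmul V B) (mtr V)) = ip A B.
Proof. move=> HV; rewrite ip_conj HV conj_id; reflexivity. Qed.

Lemma step_le N (V Q Lo L : Mat N) :
  is_orthogonal V -> is_orthogonal Q -> is_diagonal Lo -> nonincreasing Lo ->
  is_diagonal L -> nonincreasing L ->
  mdist (mmul (mmul Q Lo) (mtr Q)) (mmul (mmul Q L) (mtr Q)) <=
  mdist (mmul (mmul V Lo) (mtr V)) (mmul (mmul Q L) (mtr Q)).
Proof.
move=> HV HQ HLo HLon HL HLn.
rewrite /mdist !frob_ip; apply: sqrt_le_1_alt.
rewrite !ip_sub !ip_conj_self //.
have := @vN _ _ _ _ _ HV HQ HLo HLon HL HLn; lra.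
Qed.

Definition incr (phi : nat -> nat) := forall k, (phi k < phi (Datatypes.S k))%nat.

Lemma incr_ge phi : incr phi -> forall k, (k <= phi k)%nat.
Proof.
move=> H; elim=> [|k IH] //; apply: leq_ltn_trans IH (H k).
Qed.

Lemma incr_comp phi psi : incr phi -> incr psi -> incr (fun k => phi (psi k)).
Proof.
move=> Hphi Hpsi k.
have mono : forall a b, (a < b)%nat -> (phi a < phi b)%nat.
  move=> a b; elim: b => [|b IH] //; rewrite ltnS leq_eqVlt => /orP[/eqP->|Hab].
    exact: Hphi.
  exact: ltn_trans (IH Hab) (Hphi b).
exact: mono.
Qed.

Lemma cv_sub u l phi : incr phi -> Un_cv u l -> Un_cv (fun k => u (phi k)) l.
Proof.
move=> Hphi Hu eps Heps; have [M HM] := Hu eps Heps; exists M => n Hn.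
apply: HM; have := incr_ge _ Hphi n; move/leP; lia.
Qed.

Lemma cv_const c : Un_cv (fun _ => c) c.
Proof. move=> eps Heps; exists 0%nat => n _; rewrite /R_dist Rminus_eq_0 Rabs_R0; lra. Qed.

Lemma bw1 (u : nat -> R) B : (forall k, Rabs (u k) <= B) ->
  exists phi l, incr phi /\ Un_cv (fun k => u (phi k)) l.
Proof.
move=> HB.
have HX : forall k, (fun c => -B <= c <= B) (u k).
  move=> k; have := HB k; move: (u k) => x Hx /=.
  split; [have := Rle_abs (-x); rewrite Rabs_Ropp | have := Rle_abs x]; lra.
have [l Hl] := @Bolzano_Weierstrass u (fun c => -B <= c <= B) (compact_P3 (-B) B) HX.
have Hex : forall k m, exists p, (m <= p)%coq_nat /\ Rabs (u p - l) < / (INR k + 1).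
  move=> k m.
  have Hpos : 0 < / (INR k + 1) by apply: Rinv_0_lt_compat; have := pos_INR k; lra.
  have Hn : neighbourhood (fun x => Rabs (x - l) < / (INR k + 1)) l.
    by exists (mkposreal _ Hpos) => y Hy.
  have [p [Hp1 Hp2]] := Hl (fun x => Rabs (x - l) < / (INR k + 1)) m Hn.
  by exists p.
pose g k m := proj1_sig (constructive_indefinite_description _ (Hex k m)).
have Hg : forall k m, (m <= g k m)%coq_nat /\ Rabs (u (g k m) - l) < / (INR k + 1).
  move=> k m; exact: (proj2_sig (constructive_indefinite_description _ (Hex k m))).
pose phi := fix f k := match k with 0%nat => g 0%nat 0%nat | Datatypes.S k' => g k (Datatypes.S (f k')) end.
exists phi, l; split.
  move=> k /=; have [H1 _] := Hg (Datatypes.S k) (Datatypes.S (phi k)); apply/ltP; lia.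
move=> eps Heps; have [M [HM1 HM2]] := archimed_cor1 eps Heps.
exists M => n Hn; rewrite /R_dist.
have Hb : Rabs (u (phi n) - l) < / (INR n + 1).
  case: n Hn => [|n] Hn /=; first exact: (proj2 (Hg 0%nat 0%nat)).
  exact: (proj2 (Hg _ _)).
apply: Rlt_le_trans Hb _; apply: Rle_trans (Rlt_le _ _ HM1).
apply: Rinv_le_contravar; first exact: lt_0_INR.
have := le_INR _ _ Hn; lra.
Qed.

Lemma bwvec (I : finType) (u : nat -> I -> R) B : (forall k i, Rabs (u k i) <= B) ->
  exists phi l, incr phi /\ forall i, Un_cv (fun k => u (phi k) i) (l i).
Proof.
move=> HB.
suff : forall s : seq I, exists phi (l : I -> R), incr phi /\
    forall i, i \in s -> Un_cv (fun k => u (phi k) i) (l i).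
  move=> /(_ (enum I)) [phi [l [H1 H2]]]; exists phi, l; split => // i.
  apply: H2; by rewrite mem_enum.
elim=> [|x s [phi [l [Hphi Hl]]]].
  exists id, (fun _ => 0); split => // k; exact: ltnSn.
have [psi [lx [Hpsi Hx]]] := @bw1 _ _ (fun k => HB (phi k) x).
exists (fun k => phi (psi k)), (fun i => if i == x then lx else l i); split.
  exact: incr_comp.
move=> i; rewrite in_cons; case: eqP => [-> _|Hix /= Hi]; first exact: Hx.
exact: (@cv_sub (fun k => u (phi k) i) _ _ Hpsi (Hl i Hi)).
Qed.

Lemma cv_ext u v l : (forall k, u k = v k) -> Un_cv u l -> Un_cv v l.
Proof. move=> E H eps He; have [M HM] := H eps He; exists M => n Hn; rewrite -E; exact: HM. Qed.

Lemma cv_sum (I : Type) (r : seq I) (P : pred I) (F : nat -> I -> R) (G : I -> R) :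
  (forall i, Un_cv (fun k => F k i) (G i)) ->
  Un_cv (fun k => \big[Rplus/0]_(i <- r | P i) F k i) (\big[Rplus/0]_(i <- r | P i) G i).
Proof.
move=> H; elim: r => [|x r IH].
  rewrite big_nil; apply: (@cv_ext (fun _ => 0)); last exact: cv_const.
  by move=> k; rewrite big_nil.
rewrite big_cons; case Px: (P x).
  apply: (@cv_ext (fun k => F k x + \big[Rplus/0]_(i <- r | P i) F k i)).
    by move=> k; rewrite big_cons Px.
  exact: CV_plus.
apply: (@cv_ext (fun k => \big[Rplus/0]_(i <- r | P i) F k i)) => //.
by move=> k; rewrite big_cons Px.
Qed.

Lemma mmul_cv N (A B : nat -> Mat N) (A0 B0 : Mat N) :
  mat_cv A A0 -> mat_cv B B0 -> mat_cv (fun k => mmul (A k) (B k)) (mmul A0 B0).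
Proof.
move=> HA HB i j; rewrite /mmul; apply: cv_sum => k; exact: CV_mult.
Qed.

Lemma mtr_cv N (A : nat -> Mat N) (A0 : Mat N) :
  mat_cv A A0 -> mat_cv (fun k => mtr (A k)) (mtr A0).
Proof. move=> HA i j; exact: HA. Qed.

Lemma frob_cv N (A : nat -> Mat N) (A0 : Mat N) :
  mat_cv A A0 -> Un_cv (fun k => frob (A k)) (frob A0).
Proof.
move=> HA; rewrite /frob; apply: continuity_seq.
  apply: continuity_pt_sqrt; apply: sumR_ge0 => i _; apply: sumR_ge0 => j _; nra.
apply: cv_sum => i; apply: cv_sum => j; exact: CV_mult.
Qed.

Lemma mdist_cv N (A B : nat -> Mat N) (A0 B0 : Mat N) :
  mat_cv A A0 -> mat_cv B B0 -> Un_cv (fun k => mdist (A k) (B k)) (mdist A0 B0).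
Proof.
move=> HA HB; rewrite /mdist; apply: (@frob_cv _ (fun k => msub (A k) (B k)) (msub A0 B0)).
move=> i j; exact: CV_minus.
Qed.

Lemma mat_cv_unique N (A : nat -> Mat N) (L1 L2 : Mat N) :
  mat_cv A L1 -> mat_cv A L2 -> L1 = L2.
Proof.
move=> H1 H2; apply: functional_extensionality => i; apply: functional_extensionality => j.
exact: UL_sequence (H1 i j) (H2 i j).
Qed.

Lemma mat_cv_sub N (A : nat -> Mat N) L phi : incr phi -> mat_cv A L ->
  mat_cv (fun k => A (phi k)) L.
Proof. move=> Hphi H i j; exact: (@cv_sub (fun k => A k i j) _ _ Hphi (H i j)). Qed.

Lemma sum_ge_term (I : finType) (F : I -> R) i : (forall j, 0 <= F j) ->
  F i <= \big[Rplus/0]_(j : I) F j.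
Proof.
move=> H; rewrite (bigD1 i) //=.
have : 0 <= \big[Rplus/0]_(j | true && (j != i)) F j by apply: sumR_ge0 => j _; exact: H.
simpl; lra.
Qed.

Lemma entry_le_frob N (A : Mat N) i j : Rabs (A i j) <= frob A.
Proof.
rewrite /frob -sqrt_Rsqr_abs; apply: sqrt_le_1_alt; rewrite /Rsqr.
apply: Rle_trans (@sum_ge_term _ (fun b => A i b * A i b) j _) _.
  by move=> b; nra.
apply: (@sum_ge_term _ (fun a => \sR_(b < N) (A a b * A a b)) i).
move=> a; apply: sumR_ge0 => b _; nra.
Qed.

Lemma Rabs_sum (I : Type) (r : seq I) (P : pred I) (F : I -> R) :
  Rabs (\big[Rplus/0]_(i <- r | P i) F i) <= \big[Rplus/0]_(i <- r | P i) Rabs (F i).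
Proof.
apply: (big_ind2 (fun x y => Rabs x <= y)).
- rewrite Rabs_R0; exact: Rle_refl.
- move=> x1 x2 y1 y2 H1 H2; apply: Rle_trans (Rabs_triang _ _) _; lra.
- move=> i _; exact: Rle_refl.
Qed.

Lemma bound3 N (U X W : Mat N) i j :
  (forall a b, Rabs (U a b) <= 1) -> (forall a b, Rabs (W a b) <= 1) ->
  Rabs (mmul (mmul U X) W i j) <= \sR_(a < N) \sR_(b < N) Rabs (X a b).
Proof.
move=> HU HW; rewrite /mmul.
apply: Rle_trans (Rabs_sum _ _ _ _) _.
rewrite [X in _ <= X]exchange_big; apply: sumR_le => b _.
rewrite Rabs_mult.
apply: Rle_trans (Rmult_le_compat_l _ _ _ (Rabs_pos _) (HW b j)) _.
rewrite Rmult_1_r; apply: Rle_trans (Rabs_sum _ _ _ _) _.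
apply: sumR_le => a _; rewrite Rabs_mult.
have := HU i a; have := Rabs_pos (X a b); have := Rabs_pos (U i a); nra.
Qed.

Lemma orth_entry N (Q : Mat N) a b : is_orthogonal Q -> Rabs (Q a b) <= 1.
Proof.
move=> HQ.
have H1 : \sR_(c < N) (Q c b * Q c b) = 1.
  have := congr1 (fun M : Mat N => M b b) HQ; rewrite /idm eqxx => <-.
  by apply: eq_bigr.
have H2 := @sum_ge_term _ (fun c => Q c b * Q c b) a (fun c => ltac:(nra)).
rewrite H1 /= in H2.
case: (Rle_dec 0 (Q a b)) => H.
  rewrite Rabs_right; nra.
rewrite Rabs_left; nra.
Qed.

Lemma dec_ge (u : nat -> R) l : Un_decreasing u -> Un_cv u l -> forall n, l <= u n.
Proof.
move=> Hd Hu n.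
have Hinc : incr (fun m => (m + n)%nat) by move=> m /=; rewrite addSn.
have Hc := @cv_sub u l _ Hinc Hu.
apply: (@Rle_cv_lim (fun m => u (m + n)%nat) (fun _ => u n) l (u n) _ Hc (cv_const (u n))).
move=> m; elim: m => [|m IH] /=; first exact: Rle_refl.
rewrite addSn; apply: Rle_trans (Hd _) IH.
Qed.

Theorem theorem2 (N : nat) (C : Mat N -> Prop) (Lo : Mat N)
  (Sk Shalf : nat -> Mat N)
  (HCsym : forall X, C X -> is_symmetric X)
  (HCclosed : mat_closed C)
  (HCproj : forall X : Mat N, exists! P, is_proj C X P)
  (HLo_diag : is_diagonal Lo) (HLo_noninc : nonincreasing Lo)
  (HS0 : Mset Lo (Sk 0%nat))
  (Hhalf : forall k, is_proj C (Sk k) (Shalf k))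
  (Hnext : forall k, in_PM Lo (Shalf k) (Sk (Datatypes.S k))) :
  exists Sl Pl : Mat N,
    mat_limit_point Sk Sl /\
    is_proj C Sl Pl /\
    in_PM Lo Pl Sl /\
    Un_cv (fun k => mdist (Sk k) (Shalf k)) (mdist Sl Pl) /\
    (mdist Sl Pl = 0 -> C Sl /\ Mset Lo Sl).
Proof.
have Hex : forall k, exists QL : Mat N * Mat N,
    is_orthogonal QL.1 /\ is_diagonal QL.2 /\ nonincreasing QL.2 /\
    Shalf k = mmul (mmul QL.1 QL.2) (mtr QL.1) /\
    Sk k.+1 = mmul (mmul QL.1 Lo) (mtr QL.1).
  move=> k; have [Q [L H]] := Hnext k; by exists (Q, L).
pose QL k := proj1_sig (constructive_indefinite_description _ (Hex k)).
have HQL : forall k, is_orthogonal (QL k).1 /\ is_diagonal (QL k).2 /\ nonincreasing (QL k).2 /\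
    Shalf k = mmul (mmul (QL k).1 (QL k).2) (mtr (QL k).1) /\
    Sk k.+1 = mmul (mmul (QL k).1 Lo) (mtr (QL k).1).
  move=> k; exact: (proj2_sig (constructive_indefinite_description _ (Hex k))).
pose Qf k := (QL k).1; pose Lf k := (QL k).2.
have HQo : forall k, is_orthogonal (Qf k) by move=> k; case: (HQL k).
have HLd : forall k, is_diagonal (Lf k) by move=> k; case: (HQL k) => _ [].
have HLn : forall k, nonincreasing (Lf k) by move=> k; case: (HQL k) => _ [_ []].
have HY : forall k, Shalf k = mmul (mmul (Qf k) (Lf k)) (mtr (Qf k))
  by move=> k; case: (HQL k) => _ [_ [_ []]].
have HS : forall k, Sk k.+1 = mmul (mmul (Qf k) Lo) (mtr (Qf k))
  by move=> k; case: (HQL k) => _ [_ [_ []]].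
clearbody Qf Lf; clear HQL QL Hex.
have HM : forall k, Mset Lo (Sk k).
  case=> [|k] //; exists (Qf k); split => //.
pose d k := mdist (Sk k) (Shalf k).
pose e k := mdist (Sk k.+1) (Shalf k).
have Hde : forall k, d k.+1 <= e k.
  move=> k; rewrite /d /e; apply: (proj2 (Hhalf k.+1)); exact: (proj1 (Hhalf k)).
have Hed : forall k, e k <= d k.
  move=> k; rewrite /d /e; have [V [HV ->]] := HM k; rewrite HS HY.
  exact: step_le.
have Hdec : Un_decreasing d by move=> k; apply: Rle_trans (Hde k) (Hed k).
have Hd0 : forall k, 0 <= d k by move=> k; exact: sqrt_pos.
have Hlb : has_lb d.
  exists 0 => x [i ->]; rewrite /opp_seq; have := Hd0 i; lra.
have [dl Hdl] := decreasing_cv d Hdec Hlb.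
have Hdge : forall k, dl <= d k := dec_ge _ _ Hdec Hdl.
have Hdle : forall k, d k <= d 0%nat.
  elim=> [|k IH]; [exact: Rle_refl | exact: Rle_trans (Hdec k) IH].
pose c := \sR_(a < N) \sR_(b < N) Rabs (Lo a b) + d 0%nat.
have HYb : forall k a b, Rabs (Shalf k a b) <= c.
  move=> k a b.
  have E : Shalf k a b = Sk k a b + (Shalf k a b - Sk k a b) by ring.
  rewrite E; apply: Rle_trans (Rabs_triang _ _) _; apply: Rplus_le_compat.
    have [V0 [HV0 ->]] := HM k; apply: bound3 => a0 b0;
      [exact: (@orth_entry _ _ a0 b0 HV0) | exact: (@orth_entry _ _ b0 a0 HV0)].
  apply: (Rle_trans _ (d k)); last exact: Hdle.
  rewrite /d /mdist.
  apply: Rle_trans _ (entry_le_frob _ (msub (Sk k) (Shalf k)) a b).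
  rewrite /msub Rabs_minus_sym; exact: Rle_refl.
pose BL := \sR_(a < N) \sR_(b < N) c.
have HLb : forall k a b, Rabs (Lf k a b) <= BL.
  move=> k a b.
  have E : Lf k = mmul (mmul (mtr (Qf k)) (Shalf k)) (Qf k).
    rewrite HY -!mmulA (HQo k) mmul1 mmulA (HQo k) mmulr1; reflexivity.
  rewrite E; apply: (Rle_trans _ (\sR_(a0 < N) \sR_(b0 < N) Rabs (Shalf k a0 b0))).
    apply: bound3 => a' b';
      [exact: (@orth_entry _ _ b' a' (HQo k)) | exact: (@orth_entry _ _ a' b' (HQo k))].
  apply: sumR_le => a' _; apply: sumR_le => b' _; exact: HYb.
pose u k (x : (('I_N * 'I_N) + ('I_N * 'I_N))%type) :=
  match x with inl ij => Qf k ij.1 ij.2 | inr ij => Lf k ij.1 ij.2 end.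
have Hu : forall k x, Rabs (u k x) <= Rmax 1 BL.
  move=> k [[i j]|[i j]] /=.
    apply: Rle_trans (Rmax_l 1 BL); exact: (@orth_entry _ _ i j (HQo k)).
  apply: Rle_trans (Rmax_r 1 BL); exact: HLb.
have [psi [l [Hpsi Hl]]] := @bwvec _ u _ Hu.
pose Q0 : Mat N := fun i j => l (inl (i, j)).
pose L0 : Mat N := fun i j => l (inr (i, j)).
have HQc : mat_cv (fun k => Qf (psi k)) Q0 by move=> i j; exact: (Hl (inl (i, j))).
have HLc : mat_cv (fun k => Lf (psi k)) L0 by move=> i j; exact: (Hl (inr (i, j))).
pose Sl := mmul (mmul Q0 Lo) (mtr Q0).
pose Y := mmul (mmul Q0 L0) (mtr Q0).
have HLoc : mat_cv (fun _ => Lo) Lo by move=> i j; exact: cv_const.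
have HSc : mat_cv (fun k => Sk (psi k).+1) Sl.
  have -> : (fun k => Sk (psi k).+1) = (fun k => mmul (mmul (Qf (psi k)) Lo) (mtr (Qf (psi k)))).
    by apply: functional_extensionality => k; exact: HS.
  apply: mmul_cv; [exact: mmul_cv | exact: mtr_cv].
have HYc : mat_cv (fun k => Shalf (psi k)) Y.
  have -> : (fun k => Shalf (psi k)) = (fun k => mmul (mmul (Qf (psi k)) (Lf (psi k))) (mtr (Qf (psi k)))).
    by apply: functional_extensionality => k; exact: HY.
  apply: mmul_cv; [exact: mmul_cv | exact: mtr_cv].
have CY : C Y := HCclosed _ _ (fun k => proj1 (Hhalf (psi k))) HYc.
have [Pl [HPl Huniq]] := HCproj Sl.
have Hincr : incr (fun k => (psi k).+1) by move=> k; rewrite ltnS; exact: Hpsi.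
have Hdsub : Un_cv (fun k => d (psi k).+1) dl := @cv_sub d dl _ Hincr Hdl.
have Hdsub2 : Un_cv (fun k => d (psi k)) dl := @cv_sub d dl psi Hpsi Hdl.
have Hec : Un_cv (fun k => e (psi k)) (mdist Sl Y) := @mdist_cv _ _ _ _ _ HSc HYc.
have E1 : mdist Sl Y <= dl := Rle_cv_lim (fun k => Hed (psi k)) Hec Hdsub2.
have E2 : dl <= mdist Sl Y := Rle_cv_lim (fun k => Hde (psi k)) Hdsub Hec.
have HPlc : Un_cv (fun k => mdist (Sk (psi k).+1) Pl) (mdist Sl Pl).
  apply: (@mdist_cv _ _ (fun _ => Pl)) => // i j; exact: cv_const.
have E3 : dl <= mdist Sl Pl.
  apply: (@Rle_cv_lim (fun _ => dl) (fun k => mdist (Sk (psi k).+1) Pl) _ _ _ (cv_const dl) HPlc).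
  move=> k; apply: Rle_trans (Hdge _) _; exact: (proj2 (Hhalf _) Pl (proj1 HPl)).
have E4 : mdist Sl Pl <= mdist Sl Y := proj2 HPl Y CY.
have HprojY : is_proj C Sl Y.
  split=> // Z HZ; have := proj2 HPl Z HZ; lra.
have EY : Pl = Y := Huniq Y HprojY.
have HQ0 : is_orthogonal Q0.
  have Hc := @mmul_cv _ _ _ _ _ (@mtr_cv _ _ _ HQc) HQc.
  rewrite /is_orthogonal; apply: (@mat_cv_unique _ _ _ _ Hc) => i j.
  apply: (@cv_ext (fun _ => @idm N i j)); last exact: cv_const.
  by move=> k; rewrite (HQo (psi k)).
have HL0d : is_diagonal L0.
  move=> i j Hij; apply: (UL_sequence _ _ _ (HLc i j)).
  apply: (@cv_ext (fun _ => 0)); last exact: cv_const.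
  by move=> k; rewrite (HLd (psi k) i j Hij).
have HL0n : nonincreasing L0.
  move=> i j Hij; exact: (Rle_cv_lim (fun k => HLn (psi k) i j Hij) (HLc j j) (HLc i i)).
have Edl : mdist Sl Pl = dl by lra.
exists Sl, Pl; split.
  exists (fun k => (psi k).+1); split; [exact: Hincr | exact: HSc].
split; first exact: HPl.
split; first by exists Q0, L0; rewrite EY.
split; first by rewrite Edl; exact: Hdl.
move=> H0.
have ESP : Sl = Pl.
  apply: functional_extensionality => i; apply: functional_extensionality => j.
  have := entry_le_frob _ (msub Sl Pl) i j; rewrite -/(mdist Sl Pl) H0 /msub => H.
  have := Rabs_pos (Sl i j - Pl i j); move: H; case: (Rcase_abs (Sl i j - Pl i j)) => Hs.
    rewrite Rabs_left //; lra.
  rewrite Rabs_right //; lra.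
split; first by rewrite ESP; exact: (proj1 HPl).
by exists Q0.
Qed.
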